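(* Let $\mathbb{K}$ be a field and $n\ge2$ an integer. Let $Q=\{(2,2),(3,3),\dots,(n+2,n+2)\}$ and $P=\{(1,1)\}\cup\big(\{2,\dots,n+2\}^2\setminus Q\big)$, viewed as subsets of $\{1,\dots,n+2\}^2$. Then the CI-problem $(P,Q,n+2)$ is solvable over $\mathbb{K}$ if and only if the characteristic of $\mathbb{K}$ divides $n$.
   Context: A constrained invertibility (CI) problem is a triple $(P,Q,N)$ with $P,Q\subseteq\{1,\dots,N\}^2$; it is solvable over $\mathbb{K}$ if there is an invertible $N\times N$ matrix $A$ over $\mathbb{K}$ with $A_{i,j}=0$ for all $(i,j)\in P$ and $(A^{-1})_{i',j'}=0$ for all $(i',j')\in Q$. ''Characteristic divides $n$'' means $n\cdot1_{\mathbb{K}}=0$ (in particular it fails in characteristic $0$ unless... $n=0$, which is excluded). *)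

(* Defs.v *)
From HB Require Import structures.
From mathcomp Require Import all_boot all_order all_algebra.
Set Implicit Arguments. Unset Strict Implicit. Unset Printing Implicit Defensive.
Import GRing.Theory.
Local Open Scope ring_scope.

(* Indices {1,...,N} of the paper are represented 0-based as 'I_N. *)
Definition CI_solvable (K : fieldType) (N : nat)
    (P Q : {set 'I_N * 'I_N}) : Prop :=
  exists A : 'M[K]_N,
    [/\ A \in unitmx,
        forall i j, (i, j) \in P -> A i j = 0
      & forall i j, (i, j) \in Q -> (invmx A) i j = 0].

Definition Qset (n : nat) : {set 'I_(n.+2) * 'I_(n.+2)} :=
  [set p | (p.1 == p.2) && (0 < val p.1)%N].

Definition Pset (n : nat) : {set 'I_(n.+2) * 'I_(n.+2)} :=
  [set p | (val p.1 == 0%N) && (val p.2 == 0%N)]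
  :|: ([set p | (0 < val p.1)%N && (0 < val p.2)%N] :\: Qset n).
Arguments CI_solvable : clear implicits.

(* Main.v *)
Require Import Defs.
From mathcomp Require Import all_boot all_order all_algebra.
Local Open Scope ring_scope.
Import GRing.Theory.

Lemma sum_special (K : fieldType) m (j : 'I_m) (f : 'I_m -> K) c :
  (forall k, k != j -> f k = c) -> \sum_k f k = f j + c *+ m.-1.
Proof.
move=> H; rewrite (bigD1 j) //=; congr (_ + _).
rewrite (eq_bigr (fun _ => c)) // sumr_const.
by rewrite cardC1 card_ord.
Qed.

Lemma inP_off n (i k : 'I_n.+1) : k != i ->
  ((lift ord0 i, lift ord0 k) \in Pset n).
Proof.
move=> H; rewrite !inE /= (inj_eq lift_inj) eq_sym.
by rewrite (negbTE H).
Qed.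

Lemma inP_00 n : ((ord0, ord0) \in Pset n).
Proof. by rewrite !inE. Qed.

Lemma inQ_d n (i : 'I_n.+1) : ((lift ord0 i, lift ord0 i) \in Qset n).
Proof. by rewrite !inE eqxx. Qed.

Theorem mainTheorem7 (K : fieldType) (n : nat) (hn : (2 <= n)%N) :
  CI_solvable K (n.+2) (Pset n) (Qset n) <-> (n%:R : K) = 0.
Proof.
split.
- move=> [A [hU hP hQ]].
  set C := invmx A.
  have hAC : A *m C = 1%:M := mulmxV hU.
  have hCA : C *m A = 1%:M := mulVmx hU.
  have key : forall i : 'I_n.+1,
      C ord0 (lift ord0 i) * A (lift ord0 i) ord0 = 1.
    move=> i; move/matrixP: hAC => /(_ (lift ord0 i) (lift ord0 i)).
    rewrite /= !mxE eqxx big_ord_recl (bigD1 i) //= big1 ?addr0.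
      by rewrite (hQ _ _ (inQ_d n i)) mulr0 addr0 mulrC.
    by move=> k hk; rewrite (hP _ _ (inP_off n i k hk)) mul0r.
  move/matrixP: hCA => /(_ ord0 ord0).
  rewrite /= !mxE eqxx big_ord_recl (hP _ _ (inP_00 n)) mulr0 add0r.
  rewrite (eq_bigr (fun _ => 1)) // sumr_const card_ord mulrSr.
  by move/eqP; rewrite -subr_eq0 addrK => /eqP.
- move=> hn0.
  pose A : 'M[K]_(n.+2) := \matrix_(i, j)
    (if i == ord0 then (j != ord0)%:R else if j == ord0 then 1 else (i == j)%:R).
  pose C : 'M[K]_(n.+2) := \matrix_(i, j)
    (if i == ord0 then (if j == ord0 then -1 else 1)
     else if j == ord0 then 1 else (i == j)%:R - 1).
  have hAC : A *m C = 1%:M.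
    apply/matrixP => i j; rewrite !mxE big_ord_recl.
    have l0 : forall k : 'I_n.+1, (lift ord0 k == ord0) = false.
      by move=> k; apply/negbTE; rewrite eq_sym neq_lift.
    case: (unliftP ord0 i) => [i'|] ->; case: (unliftP ord0 j) => [j'|] ->;
      rewrite !mxE ?eqxx ?l0 /=.
    + rewrite (sum_special _ _ i' _ 0); last first.
        by move=> k hk; rewrite !mxE !l0 (inj_eq lift_inj) eq_sym (negbTE hk) mul0r.
      rewrite !mxE !l0 eqxx !(inj_eq lift_inj) mul0rn addr0 !mul1r addrC subrK.
      by [].
    + rewrite (sum_special _ _ i' _ 0); last first.
        by move=> k hk; rewrite !mxE !l0 (inj_eq lift_inj) eq_sym (negbTE hk) mul0r.
      by rewrite !mxE !l0 eqxx mul0rn addr0 !mul1r addNr.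
    + rewrite (sum_special _ _ j' _ (-1)); last first.
        by move=> k hk; rewrite !mxE !l0 eqxx (inj_eq lift_inj) (negbTE hk) mul1r sub0r.
      rewrite !mxE !l0 eqxx mul1r /= mul0r add0r eqxx subrr add0r mulNrn.
      by rewrite hn0 oppr0.
    + rewrite mul0r add0r.
      under eq_bigr => k _ do rewrite !mxE !l0 eqxx mul1r.
      by rewrite sumr_const card_ord mulrSr hn0 add0r.
  have hU : A \in unitmx by case: (mulmx1_unit hAC).
  have hI : invmx A = C.
    by rewrite -[invmx A]mulmx1 -hAC mulmxA mulVmx // mul1mx.
  exists A; split => // i j.
  + rewrite !inE /=.
    case: (unliftP ord0 i) => [i'|] ->; case: (unliftP ord0 j) => [j'|] ->;
      rewrite !mxE /= ?eqxx //.
    rewrite (inj_eq lift_inj) /=.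
    by rewrite /bump !leq0n; case: (i' == j').
  + rewrite hI !inE /= => /andP [/eqP hij hi].
    subst j; case: (unliftP ord0 i) hi => [i'|] -> // _.
    have l0 : (lift ord0 i' == ord0) = false.
      by apply/negbTE; rewrite eq_sym neq_lift.
    by rewrite !mxE l0 eqxx subrr.
Qed.
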